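(* Let $\alpha\in(0,1)$, $\sigma=1-\frac{\alpha}{2}$, and let $c^{(\alpha,\sigma)}_{i,k}$ be the L2-1$_\sigma$ coefficients defined in the context. Then, for sufficiently small temporal stepsize $\tau$, $$(2\sigma-1)\,c^{(\alpha,\sigma)}_{k+1,k}>\sigma\, c^{(\alpha,\sigma)}_{k,k}\qquad\text{for all } k\ge 1 .$$
   Context: Let $\tilde a>0$, $T>\tilde a$, $N\in\mathbb{Z}^+$, $\tau=(T-\tilde a)/N$, $t_k=\tilde a+k\tau$ ($k=0,\dots,N$), and $t_{k+\sigma}=t_k+\sigma\tau$. For $1\le i\le k$ define $$a^{(\alpha,\sigma)}_{i,k}=\Big(\log\tfrac{t_{k+\sigma}}{t_{i-1}}\Big)^{1-\alpha}-\Big(\log\tfrac{t_{k+\sigma}}{t_{i}}\Big)^{1-\alpha},$$ $$b^{(\alpha,\sigma)}_{i,k}=\frac{1}{\log\frac{t_{i+1}}{t_{i-1}}}\Big\{\tfrac{2}{2-\alpha}\Big[\Big(\log\tfrac{t_{k+\sigma}}{t_{i-1}}\Big)^{2-\alpha}-\Big(\log\tfrac{t_{k+\sigma}}{t_{i}}\Big)^{2-\alpha}\Big]-\log\tfrac{t_i}{t_{i-1}}\Big[\Big(\log\tfrac{t_{k+\sigma}}{t_{i}}\Big)^{1-\alpha}+\Big(\log\tfrac{t_{k+\sigma}}{t_{i-1}}\Big)^{1-\alpha}\Big]\Big\}.$$ The coefficients are: $c^{(\alpha,\sigma)}_{1,0}=\frac{1}{\Gamma(2-\alpha)\log\frac{t_1}{t_0}}\big(\log\frac{t_\sigma}{t_0}\big)^{1-\alpha}$;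 for $k=1$: $c^{(\alpha,\sigma)}_{1,1}=\frac{a^{(\alpha,\sigma)}_{1,1}-b^{(\alpha,\sigma)}_{1,1}}{\Gamma(2-\alpha)\log\frac{t_1}{t_0}}$, $c^{(\alpha,\sigma)}_{2,1}=\frac{b^{(\alpha,\sigma)}_{1,1}+(\log\frac{t_{1+\sigma}}{t_1})^{1-\alpha}}{\Gamma(2-\alpha)\log\frac{t_2}{t_1}}$; for $k\ge2$: $c^{(\alpha,\sigma)}_{1,k}=\frac{a^{(\alpha,\sigma)}_{1,k}-b^{(\alpha,\sigma)}_{1,k}}{\Gamma(2-\alpha)\log\frac{t_1}{t_0}}$, $c^{(\alpha,\sigma)}_{i,k}=\frac{a^{(\alpha,\sigma)}_{i,k}+b^{(\alpha,\sigma)}_{i-1,k}-b^{(\alpha,\sigma)}_{i,k}}{\Gamma(2-\alpha)\log\frac{t_i}{t_{i-1}}}$ for $2\le i\le k$, and $c^{(\alpha,\sigma)}_{k+1,k}=\frac{b^{(\alpha,\sigma)}_{k,k}+(\log\frac{t_{k+\sigma}}{t_k})^{1-\alpha}}{\Gamma(2-\alpha)\log\frac{t_{k+1}}{t_k}}$. *)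

(* Defs.v *)
From Stdlib Require Import Reals.
From Coquelicot Require Import Coquelicot.
Open Scope R_scope.

Definition Gamma (s : R) : R :=
  RInt_gen (fun x => Rpower x (s - 1) * exp (- x)) (at_right 0) (Rbar_locally p_infty).

Section L21sigma.
Variables (a0 T : R) (N : nat) (alpha sigma : R).

Definition tau : R := (T - a0) / INR N.
Definition tg (x : R) : R := a0 + x * tau.
Definition tn (i : nat) : R := tg (INR i).
Definition tks (k : nat) : R := tg (INR k + sigma).

Definition a_coef (i k : nat) : R :=
  Rpower (ln (tks k / tn (i - 1))) (1 - alpha)
  - Rpower (ln (tks k / tn i)) (1 - alpha).

Definition b_coef (i k : nat) : R :=
  / ln (tn (i + 1) / tn (i - 1)) *
  ( 2 / (2 - alpha) *
      (Rpower (ln (tks k / tn (i - 1))) (2 - alpha)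
       - Rpower (ln (tks k / tn i)) (2 - alpha))
    - ln (tn i / tn (i - 1)) *
      (Rpower (ln (tks k / tn i)) (1 - alpha)
       + Rpower (ln (tks k / tn (i - 1))) (1 - alpha))).

Definition c_coef (i k : nat) : R :=
  let G := Gamma (2 - alpha) in
  if (k =? 0)%nat then
    (* only i = 1 is meaningful *)
    / (G * ln (tn 1 / tn 0)) * Rpower (ln (tks 0 / tn 0)) (1 - alpha)
  else if (i =? 1)%nat then
    (a_coef 1 k - b_coef 1 k) / (G * ln (tn 1 / tn 0))
  else if (i =? k + 1)%nat then
    (b_coef k k + Rpower (ln (tks k / tn k)) (1 - alpha)) / (G * ln (tn (k + 1) / tn k))
  else
    (a_coef i k + b_coef (i - 1) k - b_coef i k) / (G * ln (tn i / tn (i - 1))).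

End L21sigma.

(* Main.v *)
Require Import Defs.
From Stdlib Require Import Reals Lra Lia Classical.
From Coquelicot Require Import Coquelicot.
Open Scope R_scope.
Lemma is_derive_Rpower y x : 0 < x -> is_derive (fun x => Rpower x y) x (y * Rpower x (y-1)).
Proof. intros; apply is_derive_Reals; apply derivable_pt_lim_power; auto. Qed.
Lemma ex_derive_Rpower y x : 0 < x -> ex_derive (fun x => Rpower x y) x.
Proof. intros; eexists; apply is_derive_Rpower; auto. Qed.
Lemma Derive_Rpower y x : 0 < x -> Derive (fun x => Rpower x y) x = y * Rpower x (y-1).
Proof. intros; apply is_derive_unique, is_derive_Rpower; auto. Qed.
Lemma Rpower_pos x y : 0 < Rpower x y.
Proof. unfold Rpower; apply exp_pos. Qed.

Lemma mvt (f f' : R -> R) a b : a < b -> (forall t, a <= t <= b -> is_derive f t (f' t)) ->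
  exists c, a < c < b /\ f b - f a = f' c * (b - a).
Proof.
  intros Hab Hd. destruct (MVT_cor2 f f' a b Hab) as [c [H1 H2]].
  - intros; apply is_derive_Reals; auto.
  - exists c; auto.
Qed.

Lemma Rpower_lt_neg u v p : 0 < u < v -> p < 0 -> Rpower v p < Rpower u p.
Proof.
  intros Huv Hp.
  assert (E1 : forall w, Rpower w p = / Rpower w (-p)) by (intros; rewrite <- Rpower_Ropp; f_equal; ring).
  rewrite !E1. apply Rinv_lt_contravar. apply Rmult_lt_0_compat; apply Rpower_pos.
  apply Rlt_Rpower_l; lra.
Qed.

Lemma pow_mvt p u v : 0 < u < v -> exists c, u < c < v /\
  Rpower v p - Rpower u p = p * Rpower c (p - 1) * (v - u).
Proof.
  intros H. apply (mvt (fun x => Rpower x p) (fun x => p * Rpower x (p-1))); try lra.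
  intros; apply is_derive_Rpower; lra.
Qed.

Section An.
Variable a : R.
Hypothesis Ha : 0 < a < 1.

Definition E q h := 2 / (2 - a) * (Rpower (q + h) (2 - a) - Rpower q (2 - a))
   - h * (Rpower q (1 - a) + Rpower (q + h) (1 - a)).

Lemma L1 u v : 0 < u < v ->
  (1 - a) * Rpower v (- a) * (v - u) < Rpower v (1 - a) - Rpower u (1 - a) /\
  Rpower v (1 - a) - Rpower u (1 - a) < (1 - a) * Rpower u (- a) * (v - u).
Proof.
  intros H. destruct (pow_mvt (1 - a) u v H) as [c [Hc ->]].
  replace (1 - a - 1) with (- a) by ring.
  assert (Rpower v (-a) < Rpower c (-a)) by (apply Rpower_lt_neg; lra).
  assert (Rpower c (-a) < Rpower u (-a)) by (apply Rpower_lt_neg; lra).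
  split; apply Rmult_lt_compat_r; try lra; apply Rmult_lt_compat_l; lra.
Qed.

Lemma L2 u v : 0 < u < v ->
  a * Rpower v (- a - 1) * (v - u) <= Rpower u (- a) - Rpower v (- a).
Proof.
  intros H. destruct (pow_mvt (- a) u v H) as [c [Hc Heq]].
  replace (- a - 1) with (- a - 1) in Heq by ring.
  assert (Rpower v (-a-1) < Rpower c (-a-1)) by (apply Rpower_lt_neg; lra).
  assert (a * Rpower v (- a - 1) * (v - u) <= a * Rpower c (- a - 1) * (v - u)).
  { apply Rmult_le_compat_r; try lra; apply Rmult_le_compat_l; lra. }
  lra.
Qed.

Lemma E0 q : E q 0 = 0.
Proof. unfold E; rewrite Rplus_0_r; ring. Qed.

Lemma E_nonneg q h : 0 < q -> 0 <= h -> 0 <= E q h.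
Proof.
  intros Hq Hh. destruct (Req_dec h 0) as [->|Hh0]; [rewrite E0; lra|].
  destruct (mvt (fun t => E q t)
     (fun t => Rpower (q + t) (1 - a) - Rpower q (1 - a) - t * ((1 - a) * Rpower (q + t) (- a))) 0 h)
    as [c [Hc Heq]]; try lra.
  - intros t Ht. unfold E. auto_derive.
    + repeat split; apply ex_derive_Rpower; lra.
    + rewrite !Derive_Rpower by lra.
      replace (2 - a - 1) with (1 - a) by ring. replace (1 - a - 1) with (- a) by ring.
      field; lra.
  - rewrite E0 in Heq. destruct (L1 q (q + c)) as [H1 _]; try lra.
    assert (0 <= Rpower (q + c) (1 - a) - Rpower q (1 - a) - c * ((1 - a) * Rpower (q + c) (- a))).
    { replace (q + c - q) with c in H1 by ring. nra. }
    nra.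
Qed.

Definition D q h := 2 * (Rpower (q + h) (1 - a) - Rpower q (1 - a))
   - h * (1 - a) * (Rpower q (- a) + Rpower (q + h) (- a)).

Lemma D_nonpos q h : 0 < q -> 0 <= h -> D q h <= 0.
Proof.
  intros Hq Hh. destruct (Req_dec h 0) as [->|Hh0]; [unfold D; rewrite Rplus_0_r; lra|].
  destruct (mvt (fun t => D q t)
     (fun t => (1 - a) * (Rpower (q + t) (- a) - Rpower q (- a) + t * a * Rpower (q + t) (- a - 1))) 0 h)
    as [c [Hc Heq]]; try lra.
  - intros t Ht. unfold D. auto_derive.
    + repeat split; apply ex_derive_Rpower; lra.
    + rewrite !Derive_Rpower by lra.
      replace (1 - a - 1) with (- a) by ring. field; lra.
  - assert (HD0 : D q 0 = 0) by (unfold D; rewrite Rplus_0_r; ring).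
    rewrite HD0 in Heq. assert (H1 := L2 q (q + c) ltac:(lra)).
    replace (q + c - q) with c in H1 by ring.
    assert (HX : Rpower (q + c) (- a) - Rpower q (- a) + c * a * Rpower (q + c) (- a - 1) <= 0) by nra.
    assert (0 <= (1 - a) * - (Rpower (q + c) (- a) - Rpower q (- a) + c * a * Rpower (q + c) (- a - 1)) * (h - 0)).
    { apply Rmult_le_pos; [apply Rmult_le_pos|]; lra. }
    lra.
Qed.

Lemma E_mono q1 q2 h : 0 < q1 <= q2 -> 0 <= h -> E q2 h <= E q1 h.
Proof.
  intros Hq Hh. destruct (Req_dec q1 q2) as [->|Hne]; [lra|].
  destruct (mvt (fun q => E q h) (fun q => D q h) q1 q2) as [c [Hc Heq]]; try lra.
  - intros t Ht. unfold E, D. auto_derive.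
    + repeat split; apply ex_derive_Rpower; lra.
    + rewrite !Derive_Rpower by lra.
      replace (2 - a - 1) with (1 - a) by ring. replace (1 - a - 1) with (- a) by ring.
      field; lra.
  - assert (D c h <= 0) by (apply D_nonpos; lra).
    assert (D c h * (q2 - q1) <= 0). { assert (0 <= - D c h * (q2 - q1)) by (apply Rmult_le_pos; lra). lra. }
    lra.
Qed.

Lemma Rpower_l_succ l p : 0 < l -> Rpower l p * l = Rpower l (p + 1).
Proof. intros; rewrite Rpower_plus, Rpower_1; auto. Qed.

Lemma E_scale l q h : 0 < l -> 0 < q -> 0 <= h -> E (l * q) (l * h) = Rpower l (2 - a) * E q h.
Proof.
  intros Hl Hq Hh. unfold E.
  replace (l * q + l * h) with (l * (q + h)) by ring.
  rewrite <- !(Rpower_mult_distr l) by lra.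
  replace (2 - a) with ((1 - a) + 1) by ring.
  rewrite <- !Rpower_l_succ by lra. ring.
Qed.

Let b := 1 - a.
Let s := 1 - a / 2.
Let P u := Rpower u (1 - a).

Lemma F2 x h : 0 < x -> 0 < h -> P (x + h) - P x < b * (P x / x) * h.
Proof.
  intros Hx Hh. destruct (L1 x (x + h)) as [_ H]; try lra.
  replace (x + h - x) with h in H by ring.
  replace (P x / x) with (Rpower x (- a)). exact H.
  unfold P. replace (1 - a) with (- a + 1) by ring. rewrite <- Rpower_l_succ by lra. field; lra.
Qed.

Lemma T1lem x h hp : 0 < x -> 0 < hp < h -> s * hp <= x ->
  s * (P (x + h) - P x) / h < b * P x / hp.
Proof.
  intros Hx Hh Hs.
  assert (HP : 0 < P x) by apply Rpower_pos.
  assert (H2 := F2 x h Hx (ltac:(lra))).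
  { assert (Hs0 : 0 < s) by (unfold s; lra). assert (Hb0 : 0 < b) by (unfold b; lra).
    assert (T1a : s * (P (x + h) - P x) / h < s * b * (P x / x)).
    { replace (s * (P (x + h) - P x) / h) with ((s / h) * (P (x + h) - P x)) by (field; lra).
      replace (s * b * (P x / x)) with ((s / h) * (b * (P x / x) * h)) by (field; lra).
      apply Rmult_lt_compat_l; auto. apply Rdiv_lt_0_compat; lra. }
    assert (T1b : 0 <= b * P x / hp - s * b * (P x / x)).
    { replace (b * P x / hp - s * b * (P x / x)) with (b * P x * (x - s * hp) / (x * hp)) by (field; lra).
      apply Rmult_le_pos. apply Rmult_le_pos. apply Rmult_le_pos; lra. lra.
      apply Rlt_le, Rinv_0_lt_compat, Rmult_lt_0_compat; lra. }
    lra. }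
Qed.

Lemma core1 G x h hp : 0 < G -> 0 < x -> 0 < hp < h -> s * hp <= x ->
  b * ((/ (hp + h) * E x h + P x) / (G * hp)) >
  s * ((P (x + h) - P x - / (hp + h) * E x h) / (G * h)).
Proof.
  intros HG Hx Hh Hs.
  assert (HE : 0 <= / (hp + h) * E x h) by (apply Rmult_le_pos; [apply Rlt_le, Rinv_0_lt_compat; lra| apply E_nonneg; lra]).
  set (B := / (hp + h) * E x h) in *.
  assert (HP : 0 < P x) by apply Rpower_pos.
  assert (H2 := F2 x h Hx (ltac:(lra))).
  assert (T1 : s * (P (x + h) - P x) / h < b * P x / hp).
  { assert (Hs0 : 0 < s) by (unfold s; lra). assert (Hb0 : 0 < b) by (unfold b; lra).
    assert (T1a : s * (P (x + h) - P x) / h < s * b * (P x / x)).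
    { replace (s * (P (x + h) - P x) / h) with ((s / h) * (P (x + h) - P x)) by (field; lra).
      replace (s * b * (P x / x)) with ((s / h) * (b * (P x / x) * h)) by (field; lra).
      apply Rmult_lt_compat_l; auto. apply Rdiv_lt_0_compat; lra. }
    assert (T1b : 0 <= b * P x / hp - s * b * (P x / x)).
    { replace (b * P x / hp - s * b * (P x / x)) with (b * P x * (x - s * hp) / (x * hp)) by (field; lra).
      apply Rmult_le_pos. apply Rmult_le_pos. apply Rmult_le_pos; lra. lra.
      apply Rlt_le, Rinv_0_lt_compat, Rmult_lt_0_compat; lra. }
    lra. }
  assert (Hs0 : 0 < s) by (unfold s; lra). assert (Hb0 : 0 < b) by (unfold b; lra).
  assert (T2 : 0 <= b * B / hp + s * B / h).
  { apply Rplus_le_le_0_compat; apply Rdiv_le_0_compat; try lra; apply Rmult_le_pos; lra. }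
  apply Rminus_gt.
  replace (b * ((B + P x) / (G * hp)) - s * ((P (x + h) - P x - B) / (G * h)))
    with (/ G * ((b * B / hp + s * B / h) + (b * P x / hp - s * (P (x + h) - P x) / h))) by (field; lra).
  apply Rmult_lt_0_compat; [apply Rinv_0_lt_compat; lra|lra].
Qed.

Lemma core2 G x h hp hm : 0 < G -> 0 < x -> 0 < hp < h -> s * hp <= x -> x < h -> h < hm ->
  hm <= (1 + b / 3) * h ->
  b * ((/ (hp + h) * E x h + P x) / (G * hp)) >
  s * ((P (x + h) - P x + / (h + hm) * E (x + h) hm - / (hp + h) * E x h) / (G * h)).
Proof.
  intros HG Hx Hh Hs Hxh Hhm Hlam.
  assert (Hs0 : 0 < s) by (unfold s; lra). assert (Hb0 : 0 < b) by (unfold b; lra).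
  assert (Hs1 : s <= 1) by (unfold s; lra). assert (Hb1 : b <= 1) by (unfold b; lra).
  assert (HEk : 0 <= E x h) by (apply E_nonneg; lra).
  assert (HEm : 0 <= E (x + h) hm) by (apply E_nonneg; lra).
  set (l := hm / h).
  assert (Hhl : hm = l * h) by (unfold l; field; lra).
  assert (Hl1 : 1 < l) by nra.
  assert (Hl2 : l <= 1 + b / 3) by nra.
  set (q' := (x + h) / l).
  assert (Hq' : x + h = l * q') by (unfold q'; field; lra).
  assert (Hxq : x <= q') by (unfold q'; apply Rle_div_r; nra).
  assert (F4a : E (x + h) hm = Rpower l (2 - a) * E q' h).
  { rewrite Hq', Hhl. apply E_scale; lra. }
  assert (F4b : E q' h <= E x h) by (apply E_mono; lra).
  assert (F4c : Rpower l (2 - a) <= l * l).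
  { replace (l * l) with (Rpower l (1 + 1)) by (rewrite Rpower_plus, Rpower_1; lra).
    apply Rle_Rpower; lra. }
  assert (F4d : s * (l * l) <= s + b).
  { assert (l * l <= 1 + b) by nra. nra. }
  assert (HEq' : 0 <= E q' h) by (apply E_nonneg; lra).
  assert (F4 : s * E (x + h) hm <= (s + b) * E x h).
  { rewrite F4a. assert (0 <= Rpower l (2 - a)) by (apply Rlt_le, Rpower_pos).
    assert (Rpower l (2 - a) * E q' h <= (l * l) * E x h).
    { apply Rle_trans with (Rpower l (2 - a) * E x h). apply Rmult_le_compat_l; lra.
      apply Rmult_le_compat_r; lra. }
    nra. }
  set (B := / (hp + h) * E x h). set (B' := / (h + hm) * E (x + h) hm).
  assert (HB : 0 <= B) by (apply Rmult_le_pos; [apply Rlt_le, Rinv_0_lt_compat; lra|lra]).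
  assert (HB' : s * B' <= (s + b) * B).
  { unfold B, B'. apply Rle_trans with ((s + b) * E x h / (h + hm)).
    - replace (s * (/ (h + hm) * E (x + h) hm)) with (s * E (x + h) hm / (h + hm)) by (field; lra).
      apply Rmult_le_compat_r; [apply Rlt_le, Rinv_0_lt_compat; lra|lra].
    - replace ((s + b) * (/ (hp + h) * E x h)) with ((s + b) * E x h / (hp + h)) by (field; lra).
      apply Rmult_le_compat_l. apply Rmult_le_pos; lra.
      apply Rinv_le_contravar; lra. }
  assert (T1 := T1lem x h hp Hx Hh Hs).
  assert (T2 : 0 <= b * B / hp - s * (B' - B) / h).
  { assert (b * B / h <= b * B / hp). { apply Rmult_le_compat_l. nra. apply Rinv_le_contravar; lra. }
    assert (s * (B' - B) / h <= b * B / h).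
    { apply Rmult_le_compat_r. apply Rlt_le, Rinv_0_lt_compat; lra. lra. }
    lra. }
  apply Rminus_gt.
  replace (b * ((B + P x) / (G * hp)) - s * ((P (x + h) - P x + B' - B) / (G * h)))
    with (/ G * ((b * B / hp - s * (B' - B) / h) + (b * P x / hp - s * (P (x + h) - P x) / h))) by (field; lra).
  apply Rmult_lt_0_compat; [apply Rinv_0_lt_compat; lra|lra].
Qed.
End An.

Lemma Rpower_1_base y : Rpower 1 y = 1.
Proof. unfold Rpower; rewrite ln_1, Rmult_0_r, exp_0; auto. Qed.


Section GammaPos.
Variable b : R.
Hypothesis Hb : 0 < b < 1.
Let f := fun x => Rpower x b * exp (- x).

Lemma f_cont x : 0 < x -> continuous f x.
Proof.
  intros Hx; unfold f; apply (@ex_derive_continuous R_AbsRing R_NormedModule).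
  apply (ex_derive_mult (fun x => Rpower x b) (fun x => exp (-x))).
  - eexists; apply is_derive_Rpower; auto.
  - auto_derive; auto.
Qed.

Lemma f_ex a c : 0 < a -> 0 < c -> ex_RInt f a c.
Proof.
  intros; apply (@ex_RInt_continuous R_CompleteNormedModule); intros z Hz; apply f_cont.
  assert (0 < Rmin a c) by (apply Rmin_glb_lt; auto). lra.
Qed.

Lemma f_nonneg x : 0 <= f x.
Proof. unfold f; apply Rlt_le, Rmult_lt_0_compat; [apply Rpower_pos|apply exp_pos]. Qed.

Lemma f_le_g x : 0 < x -> f x <= (1 + x) * exp (- x).
Proof.
  intros Hx; unfold f; apply Rmult_le_compat_r; [apply Rlt_le, exp_pos|].
  destruct (Rle_lt_dec x 1).
  - assert (Rpower x b <= Rpower 1 b) by (apply Rle_Rpower_l; lra).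
    rewrite Rpower_1_base in H; lra.
  - assert (Rpower x b <= Rpower x 1) by (apply Rle_Rpower; lra).
    rewrite Rpower_1 in H; lra.
Qed.

Lemma f_bound a c : 0 < a <= 1 -> 1 <= c -> RInt f a c <= 3.
Proof.
  intros Ha Hc.
  assert (HI : is_RInt (fun x => (1 + x) * exp (- x)) a c
     (minus ((fun x => - (2 + x) * exp (- x)) c) ((fun x => - (2 + x) * exp (- x)) a))).
  { apply (is_RInt_derive (fun x => - (2 + x) * exp (- x))).
    - intros x _; auto_derive; auto; ring.
    - intros x _; apply (@ex_derive_continuous R_AbsRing R_NormedModule); auto_derive; auto. }
  apply Rle_trans with (RInt (fun x => (1 + x) * exp (- x)) a c).
  - apply RInt_le; try lra. apply f_ex; lra. eexists; eauto.
    intros; apply f_le_g; lra.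
  - rewrite (is_RInt_unique _ _ _ _ HI). unfold minus, plus, opp; simpl.
    assert (exp (-a) <= 1). { rewrite <- exp_0; destruct (Req_dec a 0); [subst; lra|]. apply Rlt_le, exp_increasing; lra. }
    assert (0 < exp (-c)) by apply exp_pos. assert (0 < exp (-a)) by apply exp_pos.
    nra.
Qed.

Definition Eset v := exists a c, 0 < a <= 1 /\ 1 <= c /\ v = RInt f a c.

Lemma Gamma_pos_aux : exists l, 0 < l /\ is_RInt_gen f (at_right 0) (Rbar_locally p_infty) l.
Proof.
  assert (HB : bound Eset) by (exists 3; intros v (a & c & Ha & Hc & ->); apply f_bound; auto).
  assert (HN : exists v, Eset v) by (exists (RInt f 1 1); exists 1; exists 1; repeat split; lra).
  destruct (completeness Eset HB HN) as [l [Hub Hlub]].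
  exists l; split.
  - apply Rlt_le_trans with (RInt f 1 2).
    + assert (H := RInt_lt (fun _ => 0) f 1 2).
      rewrite RInt_const in H. unfold scal in H; simpl in H; unfold mult in H; simpl in H.
      rewrite Rmult_0_r in H. apply H; try lra.
      * intros; apply f_cont; lra.
      * intros; apply (@continuous_const R_UniformSpace R_UniformSpace).
      * intros x Hx; unfold f; apply Rmult_lt_0_compat; [apply Rpower_pos|apply exp_pos].
    + apply Hub; exists 1; exists 2; repeat split; lra.
  - apply (filterlimi_lim_ext_loc (fun ab => RInt f (fst ab) (snd ab))).
    + apply Filter_prod with (fun a => 0 < a < 1) (fun c => 1 < c).
      * exists (mkposreal 1 Rlt_0_1); intros y Hy Hy0; split; auto.
        unfold ball in Hy; simpl in Hy; unfold AbsRing_ball, abs, minus, plus, opp in Hy; simpl in Hy.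
        apply Rabs_def2 in Hy; lra.
      * exists 1; auto.
      * intros x y Hx Hy; simpl; apply (@RInt_correct R_CompleteNormedModule), f_ex; lra.
    + intros P [eps HP].
      destruct (classic (exists v, Eset v /\ l - eps < v)) as [[v [Hv Hlt]]|Hn].
      2:{ exfalso. assert (l <= l - eps). { apply Hlub. intros v Hv.
            destruct (Rle_lt_dec v (l - eps)); auto. exfalso; apply Hn; exists v; auto. }
          destruct eps; simpl in *; lra. }
      destruct Hv as (a1 & c1 & Ha1 & Hc1 & ->).
      apply Filter_prod with (fun a => 0 < a < a1) (fun c => c1 < c).
      * exists (mkposreal a1 (proj1 Ha1)); intros y Hy Hy0; split; auto.
        unfold ball in Hy; simpl in Hy; unfold AbsRing_ball, abs, minus, plus, opp in Hy; simpl in Hy.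
        apply Rabs_def2 in Hy; lra.
      * exists c1; auto.
      * intros x y Hx Hy; simpl. apply HP.
        assert (Hle : RInt f x y <= l) by (apply Hub; exists x; exists y; repeat split; lra).
        assert (Hsplit : RInt f x y = RInt f x a1 + RInt f a1 c1 + RInt f c1 y).
        { rewrite <- (RInt_Chasles f x a1 y) by (apply f_ex; lra).
          rewrite <- (RInt_Chasles f a1 c1 y) by (apply f_ex; lra).
          unfold plus; simpl; ring. }
        assert (0 <= RInt f x a1) by (apply RInt_ge_0; [lra|apply f_ex; lra|intros; apply f_nonneg]).
        assert (0 <= RInt f c1 y) by (apply RInt_ge_0; [lra|apply f_ex; lra|intros; apply f_nonneg]).
        unfold ball; simpl; unfold AbsRing_ball, abs, minus, plus, opp; simpl.
        apply Rabs_def1; lra.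
Qed.

End GammaPos.

Lemma Gamma_pos s : 1 < s < 2 -> 0 < Gamma s.
Proof.
  intros Hs. destruct (Gamma_pos_aux (s - 1) ltac:(lra)) as [l [Hl HI]].
  unfold Gamma. rewrite (is_RInt_gen_unique _ l HI); auto.
Qed.

Lemma ln_le_sub1 y : 0 < y -> ln y <= y - 1.
Proof. intros; assert (H1 := exp_ineq1_le (ln y)); rewrite exp_ln in H1; lra. Qed.

Lemma ln_ge_1inv y : 0 < y -> 1 - / y <= ln y.
Proof.
  intros Hy. assert (H := ln_le_sub1 (/ y) (Rinv_0_lt_compat _ Hy)).
  rewrite ln_Rinv in H; lra.
Qed.

Lemma ln_pos1 y : 1 < y -> 0 < ln y.
Proof. intros; rewrite <- ln_1; apply ln_increasing; lra. Qed.

Lemma div_lt a b c d : 0 < b -> 0 < d -> a * d < c * b -> a / b < c / d.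
Proof.
  intros Hb Hd H. apply Rminus_gt_0_lt.
  replace (c / d - a / b) with ((c * b - a * d) / (b * d)) by (field; lra).
  apply Rdiv_lt_0_compat; nra.
Qed.

Lemma ln_concave s w : 0 < s < 1 -> 0 < w -> s * ln (1 + w) <= ln (1 + s * w).
Proof.
  intros Hs Hw.
  destruct (mvt (fun t => ln (1 + s * t) - s * ln (1 + t)) (fun t => s / (1 + s * t) - s / (1 + t)) 0 w)
    as [c [Hc Heq]]; try lra.
  - intros t Ht. auto_derive. nra. field; nra.
  - rewrite Rmult_0_r, !Rplus_0_r, ln_1 in Heq.
    assert (0 <= s / (1 + s * c) - s / (1 + c)).
    { replace (s / (1 + s * c) - s / (1 + c)) with (s * (c * (1 - s)) / ((1 + s * c) * (1 + c))) by (field; nra).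
      apply Rdiv_le_0_compat. apply Rmult_le_pos; nra. nra. }
    assert (0 <= (s / (1 + s * c) - s / (1 + c)) * (w - 0)) by (apply Rmult_le_pos; lra).
    lra.
Qed.

Lemma hyps1 al tau B C D Sk : 0 < al < 1 -> 0 < B -> 0 < tau -> C = B + tau -> D = C + tau ->
  Sk = C + (1 - al / 2) * tau ->
  0 < ln (Sk / C) /\ 0 < ln (D / C) < ln (C / B) /\ (1 - al / 2) * ln (D / C) <= ln (Sk / C)
  /\ ln (Sk / C) < ln (C / B).
Proof.
  intros Ha HB Ht HC HD HS.
  assert (0 < C) by lra. assert (0 < D) by lra. assert (0 < Sk) by nra.
  assert (Hx : 0 < ln (Sk / C)) by (apply ln_pos1; apply Rlt_div_r; nra).
  assert (Hhp : 0 < ln (D / C)) by (apply ln_pos1; apply Rlt_div_r; nra).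
  assert (Hhph : ln (D / C) < ln (C / B)).
  { apply ln_increasing. apply Rdiv_lt_0_compat; lra. apply div_lt; [lra|lra|subst; nra]. }
  assert (Hxhp : ln (Sk / C) < ln (D / C)).
  { apply ln_increasing. apply Rdiv_lt_0_compat; lra. apply div_lt; [lra|lra|]. apply Rmult_lt_compat_r; nra. }
  assert (Hc : (1 - al / 2) * ln (D / C) <= ln (Sk / C)).
  { replace (D / C) with (1 + tau / C) by (rewrite HD; field; lra).
    replace (Sk / C) with (1 + (1 - al / 2) * (tau / C)) by (rewrite HS; field; lra).
    apply ln_concave; [lra|]. apply Rdiv_lt_0_compat; lra. }
  repeat split; lra.
Qed.

Lemma hyps2 al tau A B C D Sk : 0 < al < 1 -> 0 < A -> 0 < tau -> B = A + tau -> C = B + tau -> D = C + tau ->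
  Sk = C + (1 - al / 2) * tau -> 6 * tau <= (1 - al) * A ->
  ln (C / B) < ln (B / A) /\ ln (B / A) <= (1 + (1 - al) / 3) * ln (C / B).
Proof.
  intros Ha HA Ht HB HC HD HS H6.
  assert (HB0 : 0 < B) by lra. assert (HC0 : 0 < C) by lra.
  split.
  - apply ln_increasing. apply Rdiv_lt_0_compat; lra. apply div_lt; [lra|lra|subst; nra].
  - assert (H1 : ln (B / A) <= tau / A).
    { assert (H := ln_le_sub1 (B / A) ltac:(apply Rdiv_lt_0_compat; lra)).
      replace (B / A - 1) with (tau / A) in H by (subst; field; lra). auto. }
    assert (H2 : tau / C <= ln (C / B)).
    { assert (H := ln_ge_1inv (C / B) ltac:(apply Rdiv_lt_0_compat; lra)).
      replace (1 - / (C / B)) with (tau / C) in H by (subst; field; lra). auto. }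
    apply Rle_trans with (tau / A); auto.
    apply Rle_trans with ((1 + (1 - al) / 3) * (tau / C)).
    + replace ((1 + (1 - al) / 3) * (tau / C)) with (tau * (3 + (1 - al)) / (3 * C)) by (field; lra).
      assert (Hd : tau * (3 + (1 - al)) / (3 * C) - tau / A = tau * (3 * C - (4 - al) * A) / (3 * C * A) * (-1))
        by (field; lra).
      assert (0 <= tau * ((4 - al) * A - 3 * C) / (3 * C * A)).
      { apply Rdiv_le_0_compat. apply Rmult_le_pos; [lra|]. rewrite HC, HB. lra. nra. }
      replace (tau * (3 * C - (4 - al) * A) / (3 * C * A) * (-1)) with (tau * ((4 - al) * A - 3 * C) / (3 * C * A)) in Hd by (field; lra).
      lra.
    + apply Rmult_le_compat_l; lra.
Qed.

Lemma ln_split A B C : 0 < A -> 0 < B -> 0 < C -> ln (A / C) = ln (A / B) + ln (B / C).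
Proof.
  intros. rewrite <- ln_mult by (apply Rdiv_lt_0_compat; auto).
  f_equal; field; lra.
Qed.

Lemma b_coef_E a0 T N al sg i k :
  0 < tn a0 T N (i - 1) -> 0 < tn a0 T N i -> 0 < tn a0 T N (i + 1) -> 0 < tks a0 T N sg k ->
  b_coef a0 T N al sg i k =
  / (ln (tn a0 T N (i + 1) / tn a0 T N i) + ln (tn a0 T N i / tn a0 T N (i - 1))) *
  E al (ln (tks a0 T N sg k / tn a0 T N i)) (ln (tn a0 T N i / tn a0 T N (i - 1))).
Proof.
  intros H1 H2 H3 H4. unfold b_coef, E.
  rewrite (ln_split (tks a0 T N sg k) (tn a0 T N i) (tn a0 T N (i - 1))) by auto.
  rewrite (ln_split (tn a0 T N (i + 1)) (tn a0 T N i) (tn a0 T N (i - 1))) by auto.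
  reflexivity.
Qed.

Theorem lemma2p2 (alpha a0 T : R) :
  0 < alpha < 1 -> 0 < a0 -> a0 < T ->
  let sigma := 1 - alpha / 2 in
  exists tau0 : R, 0 < tau0 /\
    forall N : nat, (0 < N)%nat -> tau a0 T N < tau0 ->
      forall k : nat, (1 <= k)%nat -> (k + 1 <= N)%nat ->
        (2 * sigma - 1) * c_coef a0 T N alpha sigma (k + 1) k
        > sigma * c_coef a0 T N alpha sigma k k.
Proof.
  intros Ha Ha0 HT sigma; subst sigma.
  exists (a0 * (1 - alpha) / 6). split.
  { apply Rdiv_lt_0_compat; [apply Rmult_lt_0_compat|]; lra. }
  intros N HN Htau k Hk HkN.
  assert (HNr : 0 < INR N) by (apply lt_0_INR; lia).
  assert (Htt : 0 < tau a0 T N) by (unfold tau; apply Rdiv_lt_0_compat; lra).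
  assert (Htn : forall i, tn a0 T N i = a0 + INR i * tau a0 T N) by reflexivity.
  assert (Htnpos : forall i, 0 < tn a0 T N i).
  { intros i; rewrite Htn. assert (0 <= INR i) by apply pos_INR. nra. }
  assert (Htnsucc : forall i, tn a0 T N (Datatypes.S i) = tn a0 T N i + tau a0 T N).
  { intros i; rewrite !Htn, S_INR; ring. }
  assert (Htks : tks a0 T N (1 - alpha / 2) k = tn a0 T N k + (1 - alpha / 2) * tau a0 T N).
  { unfold tks, tn, tg. unfold Rdiv; ring. }
  assert (HG : 0 < Gamma (2 - alpha)) by (apply Gamma_pos; lra).
  replace (2 * (1 - alpha / 2) - 1) with (1 - alpha) by field.
  unfold c_coef; cbv beta zeta.
  rewrite (proj2 (Nat.eqb_neq k 0)) by lia.
  rewrite (proj2 (Nat.eqb_neq (k + 1) 1)) by lia.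
  rewrite Nat.eqb_refl.
  assert (Htkspos : 0 < tks a0 T N (1 - alpha / 2) k) by (rewrite Htks; specialize (Htnpos k); nra).
  assert (Htnge : forall i, a0 <= tn a0 T N i).
  { intros i; rewrite Htn. assert (0 <= INR i) by apply pos_INR. nra. }
  assert (Hk1 : tn a0 T N (k + 1) = tn a0 T N k + tau a0 T N) by (rewrite Nat.add_1_r; apply Htnsucc).
  assert (Hk0 : tn a0 T N k = tn a0 T N (k - 1) + tau a0 T N).
  { rewrite <- Htnsucc; f_equal; lia. }
  rewrite (b_coef_E a0 T N alpha (1 - alpha / 2) k k) by auto.
  destruct (Nat.eq_dec k 1) as [Hk1e|Hk2].
  - subst k. rewrite Nat.eqb_refl. try rewrite (b_coef_E a0 T N alpha (1 - alpha / 2) 1 1) by auto. unfold a_coef. change (1 - 1)%nat with 0%nat in *.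
    rewrite (ln_split (tks a0 T N (1 - alpha / 2) 1) (tn a0 T N 1) (tn a0 T N 0)) by auto.
    destruct (hyps1 alpha (tau a0 T N) (tn a0 T N 0) (tn a0 T N 1) (tn a0 T N (1 + 1))
                (tks a0 T N (1 - alpha / 2) 1)) as (H1 & H2 & H3 & H4); auto.
    apply (core1 alpha Ha); auto.
  - rewrite (proj2 (Nat.eqb_neq k 1)) by lia.
    rewrite (proj2 (Nat.eqb_neq k (k + 1))) by lia.
    rewrite (b_coef_E a0 T N alpha (1 - alpha / 2) (k - 1) k) by auto.
    replace (k - 1 + 1)%nat with k by lia.
    unfold a_coef.
    rewrite (ln_split (tks a0 T N (1 - alpha / 2) k) (tn a0 T N k) (tn a0 T N (k - 1))) by auto.
    assert (Hkm : tn a0 T N (k - 1) = tn a0 T N (k - 1 - 1) + tau a0 T N).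
    { rewrite <- Htnsucc; f_equal; lia. }
    destruct (hyps1 alpha (tau a0 T N) (tn a0 T N (k - 1)) (tn a0 T N k) (tn a0 T N (k + 1))
                (tks a0 T N (1 - alpha / 2) k)) as (H1 & H2 & H3 & H4); auto.
    destruct (hyps2 alpha (tau a0 T N) (tn a0 T N (k - 1 - 1)) (tn a0 T N (k - 1)) (tn a0 T N k) (tn a0 T N (k + 1))
                (tks a0 T N (1 - alpha / 2) k)) as (H5 & H6); auto.
    { specialize (Htnge (k - 1 - 1)%nat). nra. }
    apply (core2 alpha Ha); auto; lra.
Qed.
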